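(* Let $f\colon\mathbb Z_2\to\mathbb Z_2$ be a transitive T-function which is uniformly differentiable modulo $4$, and let $x_0\in\mathbb Z_2$. For $n,i\ge 0$ put $\chi_n^i=\delta_n(f^i(x_0))\in\{0,1\}$. Then there exists a binary sequence $(y(i))_{i=0}^\infty$, which does not depend on $n$ and whose shortest period has length $2^K$ for some integer $0\le K\le N_2(f)$, such that for every $n\ge N_2(f)+1$ and every $i=0,1,2,\ldots$, $$\chi_n^{i+2^{n-1}}\equiv\chi_{n-1}^i+\chi_n^i+\chi_{n-1}^0+\chi_n^0+\chi_n^{2^{n-1}}+y(i)\pmod 2.$$
   Context: $\mathbb Z_2$ denotes the ring of 2-adic integers; every $x\in\mathbb Z_2$ has a unique expansion $x=\sum_{j\ge0}\delta_j(x)2^j$ with $\delta_j(x)\in\{0,1\}$, and $\operatorname{ord}_2 h$ denotes the 2-adic valuation of $h$. A T-function is a map $f\colon\mathbb Z_2\to\mathbb Z_2$ such that $a\equiv b\pmod{2^s}$ implies $f(a)\equiv f(b)\pmod{2^s}$ for all $s$ (equivalently, $f$ is 1-Lipschitz for the 2-adic metric); then $f\bmod 2^n$ is a well-defined map of $\mathbb Z/2^n\mathbb Z$. $f$ is transitive if for every $n\ge1$ the reduced map $f\bmod 2^n$ is a permutation of $\mathbb Z/2^n\mathbb Z$ consisting of a single cycle (of length $2^n$). $f^i$ denotes the $i$-th iterate, $f^0=\mathrm{id}$. Given $M\ge1$, $f$ is uniformly differentiable modulo $2^M$ if there exist a function $f'_M\colon\mathbb Z_2\to\mathbb Z_2$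 (the derivative modulo $2^M$) and $K\in\mathbb N$ such that for all $x\in\mathbb Z_2$ and all nonzero $h\in\mathbb Z_2$ with $h\equiv0\pmod{2^K}$ one has $f(x+h)\equiv f(x)+f'_M(x)\,h\pmod{2^{\operatorname{ord}_2h+M}}$; the least such $K$ is denoted $N_M(f)$. *)

(* Defs.v *)
From mathcomp Require Import all_boot.
Set Implicit Arguments. Unset Strict Implicit. Unset Printing Implicit Defensive.

(* x : Z2 is the 2-adic integer sum_j delta_j(x) 2^j with delta_j(x) = x j. *)
Definition Z2 := nat -> bool.

Definition trunc (n : nat) (x : Z2) : nat := \sum_(j < n) (x j : nat) * 2 ^ j.

Definition z2add (x y : Z2) : Z2 :=
  fun j => odd ((trunc j.+1 x + trunc j.+1 y) %/ 2 ^ j).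

Definition of_nat (a : nat) : Z2 := fun j => odd (a %/ 2 ^ j).

Definition cong (s : nat) (x y : Z2) : Prop := trunc s x = trunc s y.

Definition is_Tfun (f : Z2 -> Z2) : Prop :=
  forall s a b, cong s a b -> cong s (f a) (f b).

Definition red (n : nat) (f : Z2 -> Z2) (a : nat) : nat := trunc n (f (of_nat a)).

Definition transitiveT (f : Z2 -> Z2) : Prop :=
  forall n, 0 < n ->
    (forall a b, a < 2 ^ n -> b < 2 ^ n -> red n f a = red n f b -> a = b) /\
    (forall a b, a < 2 ^ n -> b < 2 ^ n -> exists k, iter k (red n f) a = b).

(* f is uniformly differentiable modulo 2^M with constant K:
   there is f'_M such that for all x and all nonzero h with h = 0 mod 2^K,
   i.e. ord_2 h = j >= K, f(x+h) = f(x) + f'_M(x) h  (mod 2^(j+M)). *)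
Definition unif_diff_K (M : nat) (f : Z2 -> Z2) (K : nat) : Prop :=
  exists f' : Z2 -> Z2, forall (x h : Z2) (j : nat),
    h j -> (forall i, i < j -> h i = false) -> K <= j ->
    trunc (j + M) (f (z2add x h)) =
      (trunc (j + M) (f x) + trunc (j + M) (f' x) * trunc (j + M) h) %% 2 ^ (j + M).

Definition is_N (M : nat) (f : Z2 -> Z2) (N : nat) : Prop :=
  unif_diff_K M f N /\ forall K, unif_diff_K M f K -> N <= K.

Definition chi (f : Z2 -> Z2) (x0 : Z2) (n i : nat) : bool := iter i f x0 n.

Definition shortest_period (y : nat -> bool) (p : nat) : Prop :=
  0 < p /\ (forall i, y (i + p) = y i) /\
  (forall q, 0 < q -> (forall i, y (i + q) = y i) -> p <= q).

(* Main.v *)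
Require Import Defs.
From mathcomp Require Import all_boot zify ring.
From Stdlib Require Import Classical.

Lemma truncS n x : trunc n.+1 x = trunc n x + x n * 2 ^ n.
Proof. by rewrite /trunc big_ord_recr. Qed.

Lemma trunc0 x : trunc 0 x = 0.
Proof. by rewrite /trunc big_ord0. Qed.

Lemma trunc_lt n x : trunc n x < 2 ^ n.
Proof.
elim: n => [|n IH]; first by rewrite trunc0.
rewrite truncS expnS; case: (x n) => /=; lia.
Qed.

Lemma trunc_modS n x : trunc n.+1 x %% 2 ^ n = trunc n x.
Proof.
by rewrite truncS addnC modnMDl modn_small // trunc_lt.
Qed.

Lemma trunc_mod a b x : a <= b -> trunc b x %% 2 ^ a = trunc a x.
Proof.
move=> ab; elim: b ab => [|b IH]; first by rewrite leqn0 => /eqP ->; rewrite modn_small // trunc_lt.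
rewrite leq_eqVlt => /orP [/eqP ->|ab]; first by rewrite modn_small // trunc_lt.
rewrite ltnS in ab.
by rewrite -(modn_dvdm (trunc b.+1 x) (dvdn_exp2l 2 ab)) trunc_modS IH.
Qed.

Lemma trunc2 m z : trunc m.+2 z = trunc m z + 2 ^ m * (z m + 2 * z m.+1).
Proof. rewrite !truncS expnS; ring. Qed.

Lemma odd_mod a j : odd (a %/ 2 ^ j) = odd ((a %% 2 ^ j.+1) %/ 2 ^ j).
Proof.
rewrite {1}(divn_eq a (2 ^ j.+1)) expnS mulnA divnMDl ?expn_gt0 //.
by rewrite oddD oddM andbF.
Qed.

Lemma trunc_gen (G : nat -> nat) (z : Z2) :
  (forall j, z j = odd (G j.+1 %/ 2 ^ j)) ->
  (forall m, G m.+1 = G m %[mod 2 ^ m]) ->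
  forall m, trunc m z = G m %% 2 ^ m.
Proof.
move=> Hz Hc; elim=> [|m IH]; first by rewrite trunc0 modn1.
rewrite truncS IH Hz odd_mod.
set r := G m.+1 %% 2 ^ m.+1.
have rlt : r < 2 ^ m.+1 by rewrite ltn_mod expn_gt0.
have e1 : r %% 2 ^ m = G m %% 2 ^ m.
  by rewrite /r modn_dvdm ?Hc // dvdn_exp2l.
have e2 : r %/ 2 ^ m < 2 by rewrite ltn_divLR ?expn_gt0 // -expnS.
rewrite {2}(divn_eq r (2 ^ m)) e1 addnC; congr (_ * _ + _).
by move: e2; case: (r %/ 2 ^ m) => [|[|]].
Qed.

Lemma trunc_of_nat m a : trunc m (of_nat a) = a %% 2 ^ m.
Proof. by apply: (@trunc_gen (fun _ => a)). Qed.

Lemma trunc_add m x y : trunc m (z2add x y) = (trunc m x + trunc m y) %% 2 ^ m.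
Proof.
apply: (@trunc_gen (fun m => trunc m x + trunc m y)) => // k.
by rewrite -modnDm !trunc_modS.
Qed.

Lemma trunc_false m (h : Z2) : (forall k, h k = false) -> trunc m h = 0.
Proof. move=> H; rewrite /trunc big1 // => i _; by rewrite H. Qed.

Lemma trunc0_bits j (h : Z2) : trunc j h = 0 -> forall i, i < j -> h i = false.
Proof.
move=> H i ij; have := trunc_mod _ _ h ij; rewrite H mod0n truncS => /eqP.
rewrite eq_sym addn_eq0 muln_eq0 expn_eq0 /= orbF => /andP [_ /eqP] //.
by case: (h i).
Qed.

Lemma derivD (f f' : Z2 -> Z2) N : is_Tfun f ->
  (forall (x h : Z2) (j : nat),
    h j -> (forall i, i < j -> h i = false) -> N <= j ->
    trunc (j + 2) (f (z2add x h)) =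
      (trunc (j + 2) (f x) + trunc (j + 2) (f' x) * trunc (j + 2) h) %% 2 ^ (j + 2)) ->
  forall x x' j, N <= j -> cong j x x' ->
  trunc (j + 2) (f x') + trunc (j + 2) (f' x) * trunc (j + 2) x =
  trunc (j + 2) (f x) + trunc (j + 2) (f' x) * trunc (j + 2) x' %[mod 2 ^ (j + 2)].
Proof.
move=> Tf hD x x' j Nj cxx'.
pose G m := trunc m x' + (2 ^ m - trunc m x).
have GE m : G m + trunc m x = trunc m x' + 2 ^ m.
  by rewrite /G -addnA subnK // ltnW // trunc_lt.
pose h : Z2 := fun j => odd (G j.+1 %/ 2 ^ j).
have Th m : trunc m h = G m %% 2 ^ m.
  apply: trunc_gen => // k; apply/eqP; rewrite -(eqn_modDr (trunc k x)).
  have e1 : G k.+1 + trunc k x = G k.+1 + trunc k.+1 x %[mod 2 ^ k].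
    by rewrite -(modnDmr (G k.+1) (trunc k.+1 x)) trunc_modS.
  rewrite e1 !GE addnC expnS modnMDl trunc_modS modnDr.
  by rewrite modn_small // trunc_lt.
have Txh m : trunc m (z2add x h) = trunc m x'.
  rewrite trunc_add Th modnDmr addnC GE -modnDm modnn addn0 modn_mod.
  by rewrite modn_small // trunc_lt.
have cf m : trunc m (f (z2add x h)) = trunc m (f x').
  by apply: Tf; rewrite /cong Txh.
case: (classic (exists k, h k)) => [exh|nh]; last first.
  have hf k : h k = false by apply/negP => hk; apply: nh; exists k.
  have Txx m : trunc m x = trunc m x'.
    have := Txh m; by rewrite trunc_add (trunc_false m h hf) addn0 modn_small // trunc_lt.
  have Tff : trunc (j + 2) (f x) = trunc (j + 2) (f x') by apply: Tf; rewrite /cong Txx.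
  by rewrite Tff Txx.
case: (ex_minnP exh) => j' hj' minj'.
have jj' : j <= j'.
  rewrite leqNgt; apply/negP => jlt.
  have h0 : trunc j h = 0 by rewrite Th /G cxx' subnKC ?modnn // ltnW // trunc_lt.
  by rewrite (trunc0_bits _ _ h0 _ jlt) in hj'.
have lowh i : i < j' -> h i = false.
  move=> ij; apply/negP => hi; have := minj' i hi; by rewrite leqNgt ij.
have := hD x h j' hj' lowh (leq_trans Nj jj').
rewrite cf => /(congr1 (fun t => t %% 2 ^ (j + 2))).
have le2 : j + 2 <= j' + 2 by rewrite leq_add2r.
rewrite trunc_mod // modn_dvdm ?dvdn_exp2l //.
rewrite -modnDm -modnMm !trunc_mod // modnDmr.
rewrite Th => E.
apply/eqP; rewrite E modnDml.
have e2 : trunc (j + 2) (f' x) * (G (j + 2) %% 2 ^ (j + 2) + trunc (j + 2) x) =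
  trunc (j + 2) (f' x) * trunc (j + 2) x' %[mod 2 ^ (j + 2)].
  by rewrite -modnMmr modnDml GE modnDr modnMmr.
by rewrite -addnA -mulnDr -modnDmr e2 modnDmr.
Qed.

Lemma redT (f : Z2 -> Z2) n z : is_Tfun f -> trunc n (f z) = red n f (trunc n z).
Proof.
move=> Tf; rewrite /red; apply: Tf.
by rewrite /cong trunc_of_nat modn_small // trunc_lt.
Qed.

Lemma redT_iter (f : Z2 -> Z2) n t z : is_Tfun f ->
  trunc n (iter t f z) = iter t (red n f) (trunc n z).
Proof. move=> Tf; elim: t => [//|t IH]; by rewrite !iterS redT // IH. Qed.

Section Cycle.
Variables (g : nat -> nat) (M : nat).
Hypothesis gM : forall a, a < M -> g a < M.
Hypothesis ginj : forall a b, a < M -> b < M -> g a = g b -> a = b.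
Hypothesis gtr : forall a b, a < M -> b < M -> exists k, iter k g a = b.

Lemma iter_lt k a : a < M -> iter k g a < M.
Proof. move=> aM; elim: k => [//|k IH]; by rewrite iterS gM. Qed.

Lemma iter_inj k a b : a < M -> b < M -> iter k g a = iter k g b -> a = b.
Proof.
move=> aM bM; elim: k => [//|k IH]; rewrite !iterS => E.
by apply: IH; apply: ginj => //; apply: iter_lt.
Qed.

Lemma cyc_ne a p : a < M -> 0 < p < M -> iter p g a != a.
Proof.
move=> aM /andP [p0 pM]; apply/negP => /eqP E.
have Em n : iter (n * p) g a = a.
  elim: n => [//|n IH]; by rewrite mulSn iterD IH E.
pose s := [seq iter k g a | k <- iota 0 p].
have sub : {subset iota 0 M <= s}.
  move=> b; rewrite mem_iota add0n => /andP [_ bM].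
  have [k Ek] := gtr _ _ aM bM.
  apply/mapP; exists (k %% p); first by rewrite mem_iota add0n ltn_mod p0.
  by rewrite -Ek {1}(divn_eq k p) addnC iterD Em.
have := uniq_leq_size (iota_uniq 0 M) sub.
by rewrite size_map !size_iota leqNgt pM.
Qed.

Lemma cyc_eq a : a < M -> iter M g a = a.
Proof.
move=> aM; pose s := [seq iter k g a | k <- iota 0 M.+1].
have nu : ~~ uniq s.
  apply/negP => us.
  have sub : {subset s <= iota 0 M}.
    move=> b /mapP [k _ ->]; by rewrite mem_iota add0n iter_lt.
  have := uniq_leq_size us sub.
  by rewrite size_map !size_iota ltnn.
have [i [j [ij js]]] := uniqPn 0 nu.
rewrite size_map size_iota in js.
rewrite !(nth_map 0) ?size_iota ?(ltn_trans ij) // !nth_iota ?(ltn_trans ij) // !add0n => E.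
have E2 : iter (j - i) g a = a.
  apply: (@iter_inj i) => //; first by apply: iter_lt.
  by rewrite -iterD subnKC ?E // ltnW.
have : j - i <= M by rewrite leq_subLR; apply: leq_trans (leq_addl _ _); rewrite -ltnS.
rewrite leq_eqVlt => /orP [/eqP <- //|lt].
have : 0 < j - i < M by rewrite subn_gt0 ij.
by move/(cyc_ne _ _ aM); rewrite E2 eqxx.
Qed.
End Cycle.

Lemma flip (f : Z2 -> Z2) : is_Tfun f -> transitiveT f -> forall k x,
  trunc k (iter (2 ^ k) f x) = trunc k x /\ iter (2 ^ k) f x k = ~~ x k.
Proof.
move=> Tf Tr k x.
have gM n a : a < 2 ^ n -> red n f a < 2 ^ n by move=> _; apply: trunc_lt.
have P1 : trunc k (iter (2 ^ k) f x) = trunc k x.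
  case: k => [|k]; first by rewrite !trunc0.
  have [inj tr] := Tr k.+1 isT.
  by rewrite redT_iter // (@cyc_eq _ _ (gM k.+1) inj tr) // trunc_lt.
split=> //.
have [inj tr] := Tr k.+1 isT.
have ne : trunc k.+1 (iter (2 ^ k) f x) != trunc k.+1 x.
  rewrite redT_iter //; apply: (@cyc_ne _ _ tr _ _ (trunc_lt _ _)).
  by rewrite expn_gt0 /= -[X in X < _]mul1n expnS ltn_pmul2r ?expn_gt0.
move: ne; rewrite !truncS P1 eqn_add2l.
by case: (iter (2 ^ k) f x k); case: (x k); rewrite /= ?mul1n ?mul0n ?eqxx.
Qed.

Lemma cancel4 m P Q A B C E D :
  P + 2 ^ m * A + D * (Q + 2 ^ m * B) = P + 2 ^ m * C + D * (Q + 2 ^ m * E) %[mod 2 ^ m.+2] ->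
  A + D * B = C + D * E %[mod 4].
Proof.
have e1 X Y : P + 2 ^ m * X + D * (Q + 2 ^ m * Y) = (P + D * Q) + 2 ^ m * (X + D * Y) by ring.
rewrite !e1 => /eqP; rewrite eqn_modDl (_ : 2 ^ m.+2 = 2 ^ m * 4); last by rewrite !expnS; ring.
by rewrite -!muln_modr eqn_pmul2l ?expn_gt0 // => /eqP.
Qed.

Lemma red4 A B C E D : A + D * B = C + D * E %[mod 4] ->
  A + (D %% 4) * B = C + (D %% 4) * E %[mod 4].
Proof.
move=> H; rewrite -modnDmr modnMml modnDmr -[RHS]modnDmr modnMml modnDmr.
exact: H.
Qed.

Lemma bitcase (a b c d e g d0 d1 : bool) :
  (~~ a + 2 * b) + (d0 + 2 * d1) * (c + 2 * e) =
  (a + 2 * g) + (d0 + 2 * d1) * (~~ c + 2 * d) %[mod 4] ->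
  b (+) g (+) a = d (+) e (+) c (+) d1.
Proof. by case: a; case: b; case: c; case: d; case: e; case: g; case: d0; case: d1. Qed.

Definition sfun (f : Z2 -> Z2) m (x : Z2) := iter (2 ^ m) f x m.+1 (+) x m.+1 (+) x m.

Lemma S3 (f f' : Z2 -> Z2) N : is_Tfun f -> transitiveT f ->
  (forall (x h : Z2) (j : nat),
    h j -> (forall i, i < j -> h i = false) -> N <= j ->
    trunc (j + 2) (f (z2add x h)) =
      (trunc (j + 2) (f x) + trunc (j + 2) (f' x) * trunc (j + 2) h) %% 2 ^ (j + 2)) ->
  forall m x, N <= m -> sfun f m (f x) = sfun f m x (+) f' x 1.
Proof.
move=> Tf Tr hD m x Nm.
have [Fx1 Fx2] := flip f Tf Tr m x.
have [Fu1 Fu2] := flip f Tf Tr m (f x).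
have := derivD f f' N Tf hD x (iter (2 ^ m) f x) m Nm (esym Fx1).
rewrite -iterS iterSr !addn2 !trunc2 Fx1 Fu1 Fx2 Fu2 => /cancel4 /red4.
rewrite -trunc2 (trunc_mod 2 m.+2) // /trunc !big_ord_recr big_ord0 /=.
rewrite /sfun expn0 expn1 muln1 add0n (mulnC _ 2) => /bitcase.
done.
Qed.

Fixpoint Yf (f f' : Z2 -> Z2) (x : Z2) (k : nat) : bool :=
  match k with 0 => false | k.+1 => Yf f f' x k (+) f' (iter k f x) 1 end.

Lemma Yadd f f' x i k : Yf f f' x (i + k) = Yf f f' x i (+) Yf f f' (iter i f x) k.
Proof.
elim: k => [|k IH]; first by rewrite addn0 addbF.
by rewrite addnS /= IH addnC iterD addbA.
Qed.

Lemma sF (f : Z2 -> Z2) m x : is_Tfun f -> transitiveT f ->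
  sfun f m (iter (2 ^ m) f x) = sfun f m x.
Proof.
move=> Tf Tr; rewrite /sfun -iterD addnn -mul2n -expnS.
have [_ A] := flip f Tf Tr m.+1 x.
have [_ B] := flip f Tf Tr m x.
rewrite A B; by case: (x m); case: (x m.+1); case: (iter (2 ^ m) f x m.+1).
Qed.

Lemma min_ex (P : nat -> Prop) n : P n -> exists m, P m /\ forall k, P k -> m <= k.
Proof.
elim: n {-2}n (leqnn n) => [|n IH] m Hm Pm.
  by exists m; split => // k _; move: Hm; rewrite leqn0 => /eqP ->.
case: (classic (exists k, k < m /\ P k)) => [[k [Hk Pk]]|H].
  by apply: (IH k) => //; rewrite -ltnS (leq_trans Hk Hm).
exists m; split => // k Pk; rewrite leqNgt; apply/negP => km; apply: H; by exists k.
Qed.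

Lemma sp_exists (y : nat -> bool) N : (forall i, y (i + 2 ^ N) = y i) ->
  exists K, K <= N /\ shortest_period y (2 ^ K).
Proof.
move=> HN.
pose P q := 0 < q /\ forall i, y (i + q) = y i.
have PN : P (2 ^ N) by split => //; rewrite expn_gt0.
have [p [[p0 Pp] pmin]] := min_ex P _ PN.
have sub k : k * p <= 2 ^ N -> forall i, y (i + (2 ^ N - k * p)) = y i.
  elim: k => [|k IH] kp i; first by rewrite mul0n subn0 HN.
  have kp' : k * p <= 2 ^ N by apply: leq_trans kp; rewrite leq_mul2r leqnSn orbT.
  rewrite -(Pp (i + (2 ^ N - k.+1 * p))) -addnA.
  have -> : 2 ^ N - k.+1 * p + p = 2 ^ N - k * p by move: kp; rewrite mulSn; lia.
  exact: IH.
have dvd : p %| 2 ^ N.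
  rewrite /dvdn; apply/negP => r0.
  have e : 2 ^ N %% p = 2 ^ N - (2 ^ N %/ p) * p.
    by rewrite {2}(divn_eq (2 ^ N) p) addKn.
  have r : P (2 ^ N %% p).
    split; first by rewrite lt0n; apply/negP.
    move=> i; rewrite e; apply: sub; by rewrite leq_trunc_div.
  by have := pmin _ r; rewrite leqNgt ltn_mod p0.
have [K KN pK] := dvdn_pfactor p N (pdiv_prime (isT : 1 < 2)) dvd.
exists K; split => //; rewrite -pK; split => //; split; first exact: Pp. move=> q q0 Pq.
by apply: pmin.
Qed.

Theorem theorem3p1 (f : Z2 -> Z2) (x0 : Z2) (N : nat) :
  is_Tfun f -> transitiveT f -> is_N 2 f N ->
  exists (y : nat -> bool) (K : nat),
    K <= N /\ shortest_period y (2 ^ K) /\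
    forall n i, N.+1 <= n ->
      chi f x0 n (i + 2 ^ n.-1) =
        chi f x0 n.-1 i (+) chi f x0 n i (+) chi f x0 n.-1 0 (+) chi f x0 n 0
        (+) chi f x0 n (2 ^ n.-1) (+) y i.
Proof.
move=> Tf Tr [[f' hD] _].
pose y i := Yf f f' x0 i.
have Siter m k x : N <= m -> sfun f m (iter k f x) = sfun f m x (+) Yf f f' x k.
  move=> Nm; elim: k => [|k IH]; first by rewrite addbF.
  by rewrite iterS (S3 f f' N Tf Tr hD) // IH /= addbA.
have per i : y (i + 2 ^ N) = y i.
  rewrite /y Yadd.
  have := Siter N (2 ^ N) (iter i f x0) (leqnn N); rewrite sF //.
  case: (Yf f f' (iter i f x0) (2 ^ N)); last by rewrite !addbF.
  by case: (sfun f N (iter i f x0)).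
have [K [KN sp]] := sp_exists y N per.
exists y, K; split => //; split => // [[|m]] i // Nm.
rewrite ltnS in Nm.
have := Siter m i x0 Nm.
rewrite /chi /= addnC iterD /sfun /y.
case: (iter (2 ^ m) f (iter i f x0) m.+1); case: (iter i f x0 m.+1);
  case: (iter i f x0 m); case: (iter (2 ^ m) f x0 m.+1); case: (x0 m.+1);
  case: (x0 m); by case: (Yf f f' x0 i).
Qed.
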